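(* Let $A$ be an associative $F$-algebra graded by $\mathbb Z^n$, equipped with a bicharacter $p$ on homogeneous elements (so $p_{uu',v}=p_{u,v}p_{u',v}$ and $p_{u,vv'}=p_{u,v}p_{u,v'}$). Let $u_1,\dots,u_m\in A$ be homogeneous elements such that for all $1\le i,j\le m$, $u_iu_j=p_{u_i,u_j}u_ju_i$ with $p_{u_i,u_j}\in F^*$, $p_{u_i,u_j}p_{u_j,u_i}=1$, and $p_{u_i,u_j}=1$ whenever $u_i=u_j$. Then $$[u_1,\dots,u_m]_R=\prod_{j=1}^{m-1}p_{u_m\cdots u_{j+1},\,u_j}\bigl(p_{u_j,\,u_m\cdots u_{j+1}}^{3}-1\bigr)\,u_m\cdots u_2u_1,$$ where $[u_1,\dots,u_m]_R:=[u_1,[u_2,\cdots[u_{m-1},u_m]_R\cdots]_R]_R$.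
   Context: For homogeneous $u,v$, $[u,v]_R=p_{u,v}uv-p_{v,u}vu$, extended bilinearly. Typical instance: $A=\mathfrak B(V)$ for a braided vector space of diagonal type with matrix $(p_{i,j})$, graded by $\deg x_i=e_i$, with $p_{u,v}=\prod_{i,j}p_{i,j}^{a_ib_j}$ for $\deg u=\sum a_ie_i$, $\deg v=\sum b_je_j$. *)

(* Defs.v *)
From HB Require Import structures.
From mathcomp Require Import all_boot all_order all_algebra.
Set Implicit Arguments. Unset Strict Implicit. Unset Printing Implicit Defensive.
Import Order.TTheory GRing.Theory Num.Theory.
Local Open Scope ring_scope.

Definition is_Zn_grading (F : fieldType) (A : algType F) (n : nat)
    (G : 'rV[int]_n -> {pred A}) : Prop :=
  [/\ (forall d, 0 \in G d),
      (forall d (a b : A), a \in G d -> b \in G d -> a + b \in G d),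
      (forall d (c : F) (a : A), a \in G d -> c *: a \in G d),
      (forall d e (a b : A), a \in G d -> b \in G e -> a * b \in G (d + e))
    & (1 \in G 0)] /\
  ((forall a : A, exists (s : seq 'rV[int]_n) (f : 'rV[int]_n -> A),
          uniq s /\ (forall d, f d \in G d) /\ a = \sum_(d <- s) f d) /\
     (forall (s : seq 'rV[int]_n) (f : 'rV[int]_n -> A),
          uniq s -> (forall d, f d \in G d) -> \sum_(d <- s) f d = 0 ->
          forall d, d \in s -> f d = 0)).

Definition is_bichar (F : fieldType) (n : nat) (p : 'rV[int]_n -> 'rV[int]_n -> F) : Prop :=
  (forall a a' b, p (a + a') b = p a b * p a' b) /\
  (forall a b b', p a (b + b') = p a b * p a b').

(* braided commutator [x,y]_R = p_{x,y} xy - p_{y,x} yx, for x of degree a, y of degree b *)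
Definition brR (F : fieldType) (A : algType F) (n : nat)
    (p : 'rV[int]_n -> 'rV[int]_n -> F) (a b : 'rV[int]_n) (x y : A) : A :=
  p a b *: (x * y) - p b a *: (y * x).

(* degree of u_{i} ... u_{i+k} : sum of d j for i <= j <= i+k *)
Definition degsum (n : nat) (d : nat -> 'rV[int]_n) (i j : nat) : 'rV[int]_n :=
  \sum_(i <= k < j.+1) d k.

(* rnest k i = [u_i, [u_{i+1}, ... [u_{i+k-1}, u_{i+k}]_R ...]_R]_R *)
Fixpoint rnest (F : fieldType) (A : algType F) (n : nat)
    (p : 'rV[int]_n -> 'rV[int]_n -> F) (d : nat -> 'rV[int]_n) (u : nat -> A)
    (k i : nat) : A :=
  match k with
  | 0 => u i
  | k'.+1 => brR p (d i) (degsum d i.+1 (i + k)) (u i) (rnest p d u k' i.+1)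
  end.

Definition rbracket (F : fieldType) (A : algType F) (n : nat)
    (p : 'rV[int]_n -> 'rV[int]_n -> F) (d : nat -> 'rV[int]_n) (u : nat -> A)
    (m : nat) : A := rnest p d u m.-1 1.

(* Main.v *)
Require Import Defs.
From HB Require Import structures.
From mathcomp Require Import all_boot all_order all_algebra.
From mathcomp Require Import zify ring.
Import Order.TTheory GRing.Theory Num.Theory.
Local Open Scope ring_scope.

Theorem lemma3p3 (F : fieldType) (A : algType F) (n : nat)
    (G : 'rV[int]_n -> {pred A}) (p : 'rV[int]_n -> 'rV[int]_n -> F)
    (m : nat) (u : nat -> A) (d : nat -> 'rV[int]_n) :
  is_Zn_grading G ->
  is_bichar p ->
  (1 <= m)%N ->
  (forall i, (1 <= i <= m)%N -> u i \in G (d i)) ->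
  (forall i j, (1 <= i <= m)%N -> (1 <= j <= m)%N ->
     [/\ u i * u j = p (d i) (d j) *: (u j * u i),
         p (d i) (d j) != 0,
         p (d i) (d j) * p (d j) (d i) = 1
       & u i = u j -> p (d i) (d j) = 1]) ->
  rbracket p d u m =
    (\prod_(1 <= j < m)
        (p (degsum d j.+1 m) (d j) * (p (d j) (degsum d j.+1 m) ^+ 3 - 1)))
      *: \prod_(i <- rev (iota 1 m)) u i.
Proof.
move=> _ [pl pr] m1 _ H.
have p0r : forall i, (1 <= i <= m)%N -> p (d i) 0 = 1.
  move=> i hi; have [_ nz _ _] := H i i hi hi.
  have := pr (d i) (d i) 0; rewrite addr0 => e.
  by apply: (mulfI nz); rewrite mulr1 -e.
have p0l : forall i, (1 <= i <= m)%N -> p 0 (d i) = 1.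
  move=> i hi; have [_ nz _ _] := H i i hi hi.
  have := pl (d i) 0 (d i); rewrite addr0 => e.
  by apply: (mulfI nz); rewrite mulr1 -e.
have comm : forall i (s : seq nat), (1 <= i <= m)%N ->
    all (fun l => 1 <= l <= m)%N s ->
    u i * \prod_(l <- s) u l =
    (\prod_(l <- s) p (d i) (d l)) *: (\prod_(l <- s) u l * u i).
  move=> i s hi; elim: s => [|a s IH] /=.
    by rewrite !big_nil mul1r mulr1 scale1r.
  case/andP=> ha hs; rewrite !big_cons mulrA.
  have [e _ _ _] := H i a hi ha.
  rewrite e -scalerAl -[u a * u i * _]mulrA IH // -scalerAr scalerA.
  by rewrite mulrA.
have degE : forall i, degsum d i.+1 m = \sum_(k <- iota i.+1 (m - i)) d k.
  by move=> i; rewrite /degsum /index_iota subSS.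
have prR : forall i (s : seq nat), (1 <= i <= m)%N ->
    p (d i) (\sum_(k <- s) d k) = \prod_(k <- s) p (d i) (d k).
  move=> i s hi; elim: s => [|a s IH]; first by rewrite !big_nil p0r.
  by rewrite !big_cons pr IH.
have plR : forall i (s : seq nat), (1 <= i <= m)%N ->
    p (\sum_(k <- s) d k) (d i) = \prod_(k <- s) p (d k) (d i).
  move=> i s hi; elim: s => [|a s IH]; first by rewrite !big_nil p0l.
  by rewrite !big_cons pl IH.
have main : forall k i, (1 <= i)%N -> (i + k = m)%N ->
   rnest p d u k i = (\prod_(i <= j < m)
        (p (degsum d j.+1 m) (d j) * (p (d j) (degsum d j.+1 m) ^+ 3 - 1)))
      *: \prod_(l <- rev (iota i (m - i).+1)) u l.
  elim=> [|k IH] i hi him /=.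
    rewrite addn0 in him; subst i.
    by rewrite subnn big_geq // scale1r /= big_cons big_nil mulr1.
  have hi' : (1 <= i <= m)%N by rewrite hi -him leq_addr.
  rewrite (IH i.+1) //; last by rewrite addSnnS.
  have -> : (i + k.+1 = m)%N by [].
  have ltim : (i < m)%N by rewrite -him -addSnnS leq_addr.
  rewrite (big_ltn ltim).
  have hs : all (fun l => 1 <= l <= m)%N (rev (iota i.+1 (m - i))).
    rewrite all_rev; apply/allP => l; rewrite mem_iota => /andP [a b].
    apply/andP; split; lia.
  rewrite subnSK // rev_cons -cats1 big_cat big_seq1 /=.
  set P := \prod_(l <- rev (iota i.+1 (m - i))) u l.
  set C := \prod_(i.+1 <= j < m) _.
  rewrite /brR -scalerAr comm // -scalerAl !scalerA.
  rewrite -scalerBl; congr (_ *: _).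
  set a := p (d i) (degsum d i.+1 m).
  set b := p (degsum d i.+1 m) (d i).
  have Ea : \prod_(l <- rev (iota i.+1 (m - i))) p (d i) (d l) = a.
    by rewrite /a degE prR // big_rev.
  have ab : a * b = 1.
    rewrite /a /b degE prR // plR // -big_split /= big1_seq // => l.
    rewrite mem_iota => /andP [_ /andP [l1 l2]].
    have hl : (1 <= l <= m)%N by apply/andP; split; lia.
    by have [_ _ e _] := H i l hi' hl.
  rewrite Ea.
  have -> : b * (a ^+ 3 - 1) = a * a - b.
    apply/eqP; rewrite -subr_eq0; have -> : b * (a ^+ 3 - 1) - (a * a - b) = a * a * (a * b - 1) by ring.
    by rewrite ab subrr mulr0.
  ring.
rewrite /rbracket (main m.-1 1) //; last by rewrite add1n prednK.
by rewrite subn1 prednK.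
Qed.
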